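(* Let $\alpha\in\mathbb{C}$, $\beta\in\mathbb{C}\setminus\mathbb{Z}$, and $D\in\mathrm{Der}(\mathcal{W},\mathcal{F}_\alpha\otimes\mathcal{F}_\beta)_0$. Write $D(L_1)=\sum_{i\in\mathbb{Z}}a_{1,i}v_i\otimes v_{1-i}$ and $l=\max\{|i|: a_{1,i}\neq0\}$ (assuming $D(L_1)\ne 0$). Then there exist $c_{-l},\dots,c_l\in\mathbb{C}$ such that $$D(L_1)=L_1\cdot\Big(\sum_{i=-l}^{l}c_i\,v_i\otimes v_{-i}\Big)+c_l(\alpha+l)\,v_{l+1}\otimes v_{-l}.$$
   Context: The Witt algebra $\mathcal{W}$ has basis $\{L_n\mid n\in\mathbb{Z}\}$ and bracket $[L_m,L_n]=(m-n)L_{m+n}$. $\mathcal{F}_\alpha$ has basis $\{v_n\}$ with $L_m\cdot v_n=-(\alpha m+n)v_{m+n}$; $\mathcal{F}_\alpha\otimes\mathcal{F}_\beta$ is a $\mathcal{W}$-module via $L_m\cdot(v_i\otimes v_j)=-(i+\alpha m)v_{m+i}\otimes v_j-(j+\beta m)v_i\otimes v_{m+j}$, graded by $(\mathcal{F}_\alpha\otimes\mathcal{F}_\beta)_k=\bigoplus_i\mathbb{C}\,v_i\otimes v_{k-i}$. $\mathrm{Der}(\mathcal{W},\mathcal{F}_\alpha\otimes\mathcal{F}_\beta)_0$ is the space of linear maps $D$ with $D([x,y])=x\cdot D(y)-y\cdot D(x)$ and $D(L_m)\in(\mathcal{F}_\alpha\otimes\mathcal{F}_\beta)_m$ for all $m$.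 *)

(* Defs.v *)
From HB Require Import structures.
From mathcomp Require Import all_boot all_order all_algebra.
From mathcomp Require Import complex.
Set Implicit Arguments. Unset Strict Implicit. Unset Printing Implicit Defensive.
Import Order.TTheory GRing.Theory Num.Theory.
Local Open Scope ring_scope.

(* A homogeneous element of degree n of F_alpha (x) F_beta,
     sum_i b_i v_i (x) v_{n-i},
   is encoded by its coefficient function b : int -> C (b i = coefficient of
   v_i (x) v_{n-i}), which must be finitely supported. *)

Definition fin_supp (C : nzRingType) (b : int -> C) : Prop :=
  exists N : nat, forall i : int, (N < absz i)%N -> b i = 0.

(* L_m . (sum_i b_i v_i (x) v_{n-i})  is of degree m+n; its coefficient at
   v_i (x) v_{m+n-i} is returned by [tens_act alpha beta m n b i]:
   L_m . (v_j (x) v_{n-j}) = -(j + alpha m) v_{m+j} (x) v_{n-j}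
                             -(n-j + beta m) v_j (x) v_{m+n-j}. *)
Definition tens_act (C : nzRingType) (alpha beta : C) (m n : int)
  (b : int -> C) (i : int) : C :=
  - (((i - m)%:~R + alpha * m%:~R) * b (i - m))
  - (((n - i)%:~R + beta * m%:~R) * b i).

(* A degree-0 linear map D : W -> F_alpha (x) F_beta is determined by the
   family a : int -> int -> C, where a m is the coefficient function of
   D(L_m) in degree m.  It is a derivation iff the derivation identity holds
   on basis elements: D([L_m,L_n]) = (m-n) D(L_{m+n}) = L_m.D(L_n) - L_n.D(L_m). *)
Definition is_deg0_der (C : nzRingType) (alpha beta : C)
  (a : int -> int -> C) : Prop :=
  (forall m, fin_supp (a m)) /\
  (forall m n i : int,
     (m - n)%:~R * a (m + n) i
     = tens_act alpha beta m n (a n) i - tens_act alpha beta n m (a m) i).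

(* Main.v *)
Require Import Defs.
From HB Require Import structures.
From mathcomp Require Import all_boot all_order all_algebra.
From mathcomp Require Import complex.
From mathcomp Require Import zify ring lra.
Import Order.TTheory GRing.Theory Num.Theory.
Local Open Scope ring_scope.
Local Open Scope complex_scope.

Fixpoint gseq {R : rcfType} (alpha beta : R[i]) (a1 : int -> R[i]) (l : nat)
  (k : nat) : R[i] :=
  match k with
  | 0%N => 0
  | k'.+1 => - (a1 (k'%:Z - l%:Z) + ((k'%:Z - l%:Z - 1)%:~R + alpha)
                  * gseq alpha beta a1 l k') / (beta - (k'%:Z - l%:Z)%:~R)
  end.

Theorem lemmaL1p4 (R : rcfType) (alpha beta : R[i])
  (hbeta : forall z : int, beta <> z%:~R)
  (a : int -> int -> R[i]) (hD : is_deg0_der alpha beta a)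
  (l : nat)
  (hl_attained : a 1 (l%:Z) != 0 \/ a 1 (- (l%:Z)) != 0)
  (hl_max : forall i : int, (l < absz i)%N -> a 1 i = 0) :
  exists c : int -> R[i],
    forall i : int,
      a 1 i
      = tens_act alpha beta 1 0
          (fun j : int => if (absz j <= l)%N then c j else 0) i
        + (if i == (l%:Z + 1) then c (l%:Z) * (alpha + (l%:Z)%:~R) else 0).
Proof.
set g := gseq alpha beta (a 1) l.
exists (fun j => g (absz (j + l%:Z + 1)%R)) => i.
rewrite /tens_act /=.
have [hgt|hle] := ltP (l%:Z + 1) i.
  rewrite hl_max; last by lia.
  have -> : (absz (i - 1)%R <= l)%N = false by lia.
  have -> : (absz i <= l)%N = false by lia.
  have -> : (i == l%:Z + 1) = false by lia.
  by rewrite !(mulr0, oppr0, subr0, addr0).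
have [heq|hne] := eqVneq i (l%:Z + 1).
  rewrite heq hl_max; last by lia.
  have -> : (l%:Z + 1 - 1 = l%:Z) by ring.
  have -> : (absz (l%:Z) <= l)%N by lia.
  have -> : (absz (l%:Z + 1)%R <= l)%N = false by lia.
  have -> : absz (l%:Z + l%:Z + 1)%R = (l + l + 1)%N by lia.
  rewrite mulr0 subr0 mulr1; ring.
have [hlt|hge] := ltP i (- l%:Z).
  rewrite hl_max; last by lia.
  have -> : (absz (i - 1)%R <= l)%N = false by lia.
  have -> : (absz i <= l)%N = false by lia.
  by rewrite !(mulr0, oppr0, subr0, addr0).
rewrite ?(negPf hne) addr0.
have [k hk] : exists k : nat, i = k%:Z - l%:Z.
  exists (absz (i + l%:Z)%R); lia.
have Hci : (if (absz i <= l)%N then g (absz (i + l%:Z + 1)%R) else 0) = g k.+1.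
  have -> : (absz i <= l)%N by lia.
  by have -> : absz (i + l%:Z + 1)%R = k.+1 by lia.
have Hcm : (if (absz (i - 1)%R <= l)%N then g (absz (i - 1 + l%:Z + 1)%R) else 0) = g k.
  case: ifP => hh.
    by have -> : absz (i - 1 + l%:Z + 1)%R = k by lia.
  by have -> : k = 0%N by lia.
rewrite Hci Hcm /= /g /=.
have hb : beta - (k%:Z - l%:Z)%:~R != 0.
  by rewrite subr_eq0; apply/eqP; apply: hbeta.
rewrite -hk.
rewrite -hk in hb.
set G := gseq _ _ _ _ k.
have h0 : ((0 - i)%:~R : R[i]) = - i%:~R by rewrite sub0r mulrNz.
rewrite h0 mulr1.
have h1 : (1%:~R : R[i]) = 1 by [].
rewrite h1 mulr1.
move: hb; generalize (i%:~R : R[i]) (a 1 i) G.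
move=> x A H hb.
by rewrite [- x + beta]addrC mulrCA mulfV // mulr1 opprK addrCA addNr addr0.
Qed.
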